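(* Let $\langle I_n:n\in\omega\rangle$ be a sequence of $\sigma$-ideals on a set $X$ with $I_{n+1}\subseteq I_n$ for all $n$, and let $I=\bigcap_n I_n$. Suppose that for each $m\in\omega$ there is a Galois–Tukey morphism from $\mathbf{Cof}(I_m)$ to $\mathbf{Lc}(\omega,2^{\mathrm{id}})$. Then there is a Galois–Tukey morphism from $\mathbf{Cof}(I)$ to $\mathbf{Lc}(\omega,2^{\mathrm{id}})$.
   Context: A relational system is a triple $(A,B,R)$ with $R\subseteq A\times B$. A Galois–Tukey morphism from $(A,B,R)$ to $(A',B',S)$ is a pair $(\varphi,\psi)$ with $\varphi\colon A\to A'$, $\psi\colon B'\to B$ such that for all $x\in A$, $y\in B'$: $\varphi(x)\,S\,y$ implies $x\,R\,\psi(y)$. For an ideal $J$, $\mathbf{Cof}(J)=(J,J,\subseteq)$. $\mathbf{Lc}(\omega,2^{\mathrm{id}})=(\omega^\omega,S,\in^* )$ where $S=\prod_{n\in\omega}[\omega]^{\le 2^n}$ is the set of sequences $\phi$ with $\phi(n)\subseteq\omega$, $|\phi(n)|\le2^n$, and $x\in^*\phi$ iff $x(n)\in\phi(n)$ for all but finitely many $n$. *)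

(* Defs.v *)
From Stdlib Require Import List Arith.
Import ListNotations.

Definition subset {X : Type} (A B : X -> Prop) : Prop := forall x, A x -> B x.

Definition sigma_ideal {X : Type} (J : (X -> Prop) -> Prop) : Prop :=
  J (fun _ => False) /\
  (forall A B : X -> Prop, J B -> subset A B -> J A) /\
  (forall F : nat -> (X -> Prop), (forall n, J (F n)) ->
     J (fun x => exists n, F n x)).

Record relsys := RelSys { rs_A : Type; rs_B : Type; rs_R : rs_A -> rs_B -> Prop }.

Definition GT_morphism (P Q : relsys) : Prop :=
  exists (phi : rs_A P -> rs_A Q) (psi : rs_B Q -> rs_B P),
    forall (x : rs_A P) (y : rs_B Q), rs_R Q (phi x) y -> rs_R P x (psi y).

Definition Cof {X : Type} (J : (X -> Prop) -> Prop) : relsys :=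
  @RelSys {A : X -> Prop | J A} {A : X -> Prop | J A}
    (fun a b => subset (proj1_sig a) (proj1_sig b)).

(* S = prod_n [omega]^{<= 2^n}: each phi(n) is a finite subset of omega of
   size <= 2^n, represented as (the elements of) a list of length <= 2^n. *)
Definition slalom := {phi : nat -> list nat | forall n, length (phi n) <= 2 ^ n}.

Definition in_star (x : nat -> nat) (phi : slalom) : Prop :=
  exists N, forall n, N <= n -> In (x n) (proj1_sig phi n).

Definition Lc_omega_2id : relsys := @RelSys (nat -> nat) slalom in_star.

(* Main.v *)
Require Import Defs.
From Stdlib Require Import List Arith.
From Stdlib Require Import Cantor IndefiniteDescription Lia.
Import ListNotations.

Fixpoint enc (l : list nat) : nat :=
  match l with [] => 0 | a :: l' => Cantor.to_nat (a, enc l') end.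

Fixpoint proj (m c : nat) : nat :=
  match m with
  | 0 => fst (Cantor.of_nat c)
  | S m' => proj m' (snd (Cantor.of_nat c))
  end.

Lemma proj_enc : forall l m, m < length l -> proj m (enc l) = nth m l 0.
Proof.
  induction l as [|a l IH]; intros m Hm; [simpl in Hm; lia|].
  change (enc (a :: l)) with (Cantor.to_nat (a, enc l)).
  destruct m; cbn [proj]; rewrite Cantor.cancel_of_to; cbn [fst snd nth]; auto.
  apply IH; simpl in Hm; lia.
Qed.

Definition mkfun (m : nat) (s : slalom) (n : nat) : list nat :=
  if m <=? n then map (proj m) (proj1_sig s n) else [].

Lemma mkfun_len m s n : length (mkfun m s n) <= 2 ^ n.
Proof.
  unfold mkfun. destruct (m <=? n).
  - rewrite length_map. apply (proj2_sig s).
  - simpl. lia.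
Qed.

Definition mk (m : nat) (s : slalom) : slalom :=
  exist _ (mkfun m s) (mkfun_len m s).

Definition code (f : nat -> nat -> nat) (n : nat) : nat :=
  enc (map (fun m => f m n) (seq 0 (S n))).

Lemma code_proj f m n : m <= n -> proj m (code f n) = f m n.
Proof.
  intro H. unfold code. rewrite proj_enc.
  - rewrite nth_indep with (d' := (fun m => f m n) 0).
    + rewrite (map_nth (fun m => f m n) (seq 0 (S n)) 0 m), seq_nth; [reflexivity|lia].
    + rewrite length_map, length_seq; lia.
  - rewrite length_map, length_seq; lia.
Qed.

Lemma mk_star f s m : in_star (code f) s -> in_star (f m) (mk m s).
Proof.
  intros [N HN]. exists (max N m). intros n Hn. simpl. unfold mkfun.
  replace (m <=? n) with true by (symmetry; apply Nat.leb_le; lia).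
  rewrite <- code_proj by lia. apply in_map. apply HN. lia.
Qed.

Theorem theorem4p4 (X : Type) (In_ : nat -> (X -> Prop) -> Prop) :
  (forall n, sigma_ideal (In_ n)) ->
  (forall n (A : X -> Prop), In_ (S n) A -> In_ n A) ->
  (forall m, GT_morphism (Cof (In_ m)) Lc_omega_2id) ->
  GT_morphism (Cof (fun A : X -> Prop => forall n, In_ n A)) Lc_omega_2id.
Proof.
  intros Hid _ Hgt.
  pose (P1 := fun m => constructive_indefinite_description _ (Hgt m)).
  pose (ph := fun m => proj1_sig (P1 m)).
  pose (P2 := fun m => constructive_indefinite_description _ (proj2_sig (P1 m))).
  pose (ps := fun m => proj1_sig (P2 m)).
  assert (Hm : forall m x y, in_star (ph m x) y ->
            subset (proj1_sig x) (proj1_sig (ps m y))).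
  { intros m x y H. exact (proj2_sig (P2 m) x y H). }
  clearbody ph ps. clear P2 P1.
  simpl in *.
  pose (Bs := fun (s : slalom) (x : X) => forall m, proj1_sig (ps m (mk m s)) x).
  assert (HB : forall s n, In_ n (Bs s)).
  { intros s n. destruct (Hid n) as [_ [Hd _]].
    apply Hd with (B := proj1_sig (ps n (mk n s))).
    - exact (proj2_sig (ps n (mk n s))).
    - intros x Hx. apply Hx. }
  exists (fun a : {A : X -> Prop | forall n, In_ n A} => code (fun m => ph m (exist _ (proj1_sig a) (proj2_sig a m)))).
  exists (fun s => exist _ (Bs s) (HB s)).
  intros [A HA] s Hs. simpl in *. intros x Hx m.
  apply (Hm m (exist _ A (HA m)) (mk m s)).
  - apply (mk_star (fun m => ph m (exist _ A (HA m))) s m Hs).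
  - exact Hx.
Qed.
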